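(* Let $\ell\geq 2$ be an integer. Then $\mathbb{O}_2(\ell,\mathbb{Q})\neq\emptyset$ if and only if the factorization of $\ell$ into powers of distinct primes is of the form $\ell=p_1^{k_1}\cdots p_r^{k_r}$ with $p_i\equiv 1\bmod 4$ for every $i\leq r$. In that case, $\#\mathbb{O}_2(\ell,\mathbb{Q})=2^{r+3}$, where $r$ is the number of distinct prime factors of $\ell$.
   Context: The level of a rational matrix $Q$ is the least integer $\ell\geq 1$ with $\ell Q$ having integer entries. $\mathbb{O}_n(\ell,\mathbb{Q})$ denotes the set of all rational orthogonal $n\times n$ matrices with level $\ell$. *)

(* Defs.v *)
From mathcomp Require Import all_boot all_order all_algebra.
Set Implicit Arguments. Unset Strict Implicit. Unset Printing Implicit Defensive.
Import Order.TTheory GRing.Theory Num.Theory.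
Local Open Scope ring_scope.

Definition int_mx (m n : nat) (A : 'M[rat]_(m, n)) : Prop :=
  forall i j, A i j \is a Num.int.

Definition has_level (n : nat) (Q : 'M[rat]_n) (l : nat) : Prop :=
  (0 < l)%N /\ int_mx (l%:R *: Q) /\
  (forall m : nat, (0 < m)%N -> (m < l)%N -> ~ int_mx (m%:R *: Q)).

Definition orthogonal_mx (n : nat) (Q : 'M[rat]_n) : Prop :=
  Q *m Q^T = 1%:M.

Definition in_O (n l : nat) (Q : 'M[rat]_n) : Prop :=
  orthogonal_mx Q /\ has_level Q l.

(* Main.v *)
Require Import Defs.
From mathcomp Require Import all_boot all_order all_algebra.
From mathcomp Require Import cyclic finfield zify ring lra.
Set Implicit Arguments. Unset Strict Implicit. Unset Printing Implicit Defensive.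
Import Order.TTheory GRing.Theory Num.Theory.
Definition Tl (n : nat) : seq nat := [seq t <- iota 0 n | n %| t ^ 2 + 1].

Lemma Tl_uniq n : uniq (Tl n).
Proof. by rewrite filter_uniq ?iota_uniq. Qed.

Lemma mem_Tl n t : (t \in Tl n) = (t < n) && (n %| t ^ 2 + 1).
Proof. by rewrite mem_filter mem_iota add0n andbC. Qed.

Lemma root_mod a t : (a %| t ^ 2 + 1) = (a %| (t %% a) ^ 2 + 1).
Proof. by rewrite /dvdn -[in RHS]modnDml modnXm modnDml. Qed.

Lemma size_Tl_mul a b : coprime a b -> 0 < a -> 0 < b ->
  size (Tl (a * b)) = size (Tl a) * size (Tl b).
Proof.
move=> co a0 b0.
rewrite -(size_allpairs pair) -(size_map (fun t => (t %% a, t %% b))).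
apply: perm_size; apply: uniq_perm.
- rewrite map_inj_in_uniq ?Tl_uniq // => t t'.
  rewrite !mem_Tl => /andP[tl _] /andP[t'l _] [e1 e2].
  have: t == t' %[mod a * b] by rewrite chinese_remainder // e1 e2 !eqxx.
  by rewrite !modn_small // => /eqP.
- by apply: allpairs_uniq; rewrite ?Tl_uniq // => -[x y] [x' y'] _ _ /= [-> ->].
- move=> [r s]; apply/mapP/allpairsP => [[t]|[[r' s']]] /=.
  + rewrite mem_Tl => /andP[tl dv] [-> ->]; exists (t %% a, t %% b).
    rewrite /= !mem_Tl !ltn_pmod // -!root_mod; split => //.
      by apply: dvdn_trans dv; apply: dvdn_mulr.
    by apply: dvdn_trans dv; apply: dvdn_mull.
  + rewrite /= !mem_Tl => -[/andP[ra da] /andP[sb db] [-> ->]].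
    pose c := chinese a b r' s'.
    have ca : c %% (a * b) %% a = r'.
      by rewrite modn_dvdm ?dvdn_mulr // chinese_modl // modn_small.
    have cb : c %% (a * b) %% b = s'.
      by rewrite modn_dvdm ?dvdn_mull // chinese_modr // modn_small.
    exists (c %% (a * b)); last by rewrite ca cb.
    rewrite mem_Tl ltn_pmod ?muln_gt0 ?a0 //= Gauss_dvd //.
    by rewrite (root_mod a) ca (root_mod b) cb da db.
Qed.

Lemma sqrtm1_p p : prime p -> p %% 4 = 1 -> exists t, p %| t ^ 2 + 1.
Proof.
move=> pP p4.
have p5 : 4 < p by have := prime_gt1 pP; lia.
pose F := 'F_p.
have cF : #|F| = p by rewrite card_Fp.
pose rs := enum (predC1 (0 : F)%R).
have rsn : (all (p.-1).-unity_root rs)%R.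
  apply/allP => x; rewrite mem_enum /= => x0; apply/unity_rootP.
  apply: (mulIf x0); rewrite mul1r -exprSr prednK ?prime_gt0 //.
  by have := expf_card x; rewrite cF.
have p10 : 0 < p.-1 by lia.
have := has_prim_root p10 rsn (enum_uniq _).
rewrite -cardE cardC1 cF leqnn => /(_ isT) /hasP[w _ wP].
pose h := p %/ 4.
have ph : p.-1 = 4 * h by rewrite /h; lia.
have h0 : 0 < h by rewrite /h; lia.
pose z := (w ^+ h)%R.
have z4 : ((z ^+ 2) ^+ 2 = 1)%R.
  by rewrite /z -!exprM -(prim_expr_order wP) ph; congr (_ ^+ _)%R; lia.
have z2 : (z ^+ 2 != 1)%R.
  rewrite /z -exprM -(prim_order_dvd wP) ph.
  apply/negP => /dvdn_leq; lia.
have zm1 : (z ^+ 2 = -1)%R.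
  apply/eqP; rewrite -addr_eq0.
  have : ((z ^+ 2 - 1) * (z ^+ 2 + 1) == 0)%R.
    by rewrite -subr_sqr expr1n z4 subrr.
  by rewrite mulf_eq0 subr_eq0 (negbTE z2).
exists (val z).
rewrite (dvdn_pcharf (pchar_Fp pP)) natrD natrX.
by rewrite (natr_Zp z) zm1 addNr.
Qed.

Lemma not_dvd_root p t : 1 < p -> p %| t ^ 2 + 1 -> ~~ (p %| t).
Proof.
move=> p1 d; apply/negP => pt.
have pt2 : p %| t ^ 2 by rewrite expnS dvdn_mulr.
move: d; rewrite dvdn_addr // => /dvdn_leq; lia.
Qed.

Lemma hensel p j t : prime p -> odd p -> p ^ j.+1 %| t ^ 2 + 1 ->
  exists t', p ^ j.+2 %| t' ^ 2 + 1.
Proof.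
move=> pP op dv.
have cop : coprime p (2 * t).
  rewrite coprimeMr coprimen2 op prime_coprime //.
  apply: not_dvd_root (prime_gt1 pP) _.
  by apply: dvdn_trans dv; rewrite dvdn_exp.
have [a _ da] := Bezoutl (2 * t) (prime_gt0 pP).
rewrite (eqnP cop) in da.
have [c Ec] := dvdnP da.
have [q Eq] := dvdnP dv.
exists (t + q * a * (p ^ j * p)).
have -> : (t + q * a * (p ^ j * p)) ^ 2 + 1
   = (t ^ 2 + 1) + q * (p ^ j * p) * (a * (2 * t)) + (q * a * (p ^ j * p)) ^ 2 by ring.
rewrite Eq -expnSr.
have -> : q * p ^ j.+1 + q * p ^ j.+1 * (a * (2 * t)) = q * p ^ j.+1 * (1 + a * (2 * t)) by ring.
rewrite Ec; apply/dvdnP; exists (q * c + q ^ 2 * a ^ 2 * p ^ j).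
rewrite !expnS; ring.
Qed.

Lemma root_pk p k : prime p -> p %% 4 = 1 -> 0 < k -> exists t, p ^ k %| t ^ 2 + 1.
Proof.
move=> pP p4; case: k => // k _.
have op : odd p by rewrite (divn_eq p 4) oddD p4 oddM andbF.
elim: k => [|k [t IH]]; first by rewrite expn1; exact: sqrtm1_p.
exact: hensel IH.
Qed.

Lemma two_roots p k s t : prime p -> odd p -> 0 < k -> p ^ k %| s ^ 2 + 1 ->
  p ^ k %| t ^ 2 + 1 -> s <= t -> t < p ^ k -> (s == t) || (s + t == p ^ k).
Proof.
move=> pP op k0 ds dt st tl.
have p1 := prime_gt1 pP.
have pk1 : 1 < p ^ k by rewrite -(expn0 p) ltn_exp2l.
have dd : p ^ k %| (t - s) * (t + s).
  rewrite -subn_sqr.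
  have -> : t ^ 2 - s ^ 2 = (t ^ 2 + 1) - (s ^ 2 + 1) by rewrite subnDr.
  exact: dvdn_sub.
have ps : ~~ (p %| s).
  by apply: not_dvd_root p1 _; apply: dvdn_trans ds; rewrite dvdn_exp.
case: (boolP (p %| t - s)) => pts.
  have npts : ~~ (p %| t + s).
    apply/negP => pts'.
    have : p %| (t + s) - (t - s) by exact: dvdn_sub.
    have -> : (t + s) - (t - s) = 2 * s by clear -st; lia.
    rewrite Euclid_dvdM // (negbTE ps) orbF => /dvdn_leq h2.
    have e : p = 2 by clear -h2 p1; lia.
    by rewrite e in op.
  have : p ^ k %| t - s.
    by rewrite -(@Gauss_dvdl _ _ (t + s)) // coprimeXl // prime_coprime.
  case: (posnP (t - s)) => [h _|h /dvdn_leq].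
    by apply/orP; left; apply/eqP; clear -h st; lia.
  by move=> /(_ h); clear -tl; lia.
have : p ^ k %| t + s.
  by rewrite -(@Gauss_dvdr _ (t - s)) // coprimeXl // prime_coprime.
case/dvdnP => c Ec.
have t0 : 0 < t + s.
  case: (posnP (t + s)) => // h.
  have s0 : s = 0 by clear -h; lia.
  by move: ds; rewrite s0 => /dvdn_leq; clear -pk1; lia.
apply/orP; right; apply/eqP.
clear -Ec t0 tl st; move: Ec t0 tl st; move: (p ^ k) => P.
case: c => [|[|c]] Ec t0 tl st; try lia.
Qed.
Lemma root_sym n t : t <= n -> n %| t ^ 2 + 1 -> n %| (n - t) ^ 2 + 1.
Proof.
move=> tn d.
have E : (n - t) ^ 2 + 1 + n * (2 * t) = n * n + (t ^ 2 + 1).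
  have -> : n = (n - t) + t by lia.
  rewrite addnK; ring.
have : n %| (n - t) ^ 2 + 1 + n * (2 * t) by rewrite E dvdn_add // dvdn_mulr.
by rewrite dvdn_addl // dvdn_mulr.
Qed.

Lemma odd_p4 p : p %% 4 = 1 -> odd p.
Proof. by move=> p4; rewrite (divn_eq p 4) oddD p4 oddM andbF. Qed.

Lemma size_Tl_pp p k : prime p -> p %% 4 = 1 -> 0 < k -> size (Tl (p ^ k)) = 2.
Proof.
move=> pP p4 k0.
have op := odd_p4 p4.
have p1 := prime_gt1 pP.
have pk1 : 1 < p ^ k by rewrite -(expn0 p) ltn_exp2l.
have [t0 d0] := root_pk pP p4 k0.
pose t1 := t0 %% p ^ k.
have d1 : p ^ k %| t1 ^ 2 + 1 by rewrite -root_mod.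
have t1l : t1 < p ^ k by rewrite ltn_pmod // ltnW.
have t1p : 0 < t1.
  case: (posnP t1) => // h; move: d1; rewrite h => /dvdn_leq; clear -pk1; lia.
have opk : odd (p ^ k) by rewrite oddX op orbT.
have d2 := root_sym (ltnW t1l) d1.
move: d1 d2 t1l t1p; move: t1 => t1 d1 d2 t1l t1p.
rewrite -(perm_size (_ : perm_eq [:: t1; p ^ k - t1] _)) //.
apply: uniq_perm; rewrite ?Tl_uniq //=.
  rewrite inE andbT; apply/negP => /eqP e.
  have e2 : p ^ k = 2 * t1 by clear -e t1l; lia.
  by move: opk; rewrite e2 oddM.
move=> x; rewrite !inE mem_Tl; apply/idP/idP.
  case/orP => /eqP ->; rewrite ?t1l ?d1 ?d2 //=.
  by clear -t1p t1l; lia.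
case/andP => xl dx.
case: (leqP x t1) => h.
  case/orP: (two_roots pP op k0 dx d1 h t1l) => /eqP e; apply/orP; [left|right]; apply/eqP.
    by [].
  by clear -e; lia.
case/orP: (two_roots pP op k0 d1 dx (ltnW h) xl) => /eqP e; apply/orP; [left|right]; apply/eqP.
  by [].
by clear -e; lia.
Qed.
Lemma Tl1 : Tl 1 = [:: 0].
Proof. by []. Qed.

Lemma size_Tl_sq n : 0 < n -> (forall p, p \in primes n -> p %% 4 = 1) ->
  size (Tl (n ^ 2)) = 2 ^ size (primes n).
Proof.
have [k] := ubnP n; elim: k n => // k IH n nk n0 H.
case: (ltnP 1 n) => [n1|]; last first.
  by move=> h; have -> : n = 1 by clear -h n0; lia.
have pP := pdiv_prime n1.
have pn := pdiv_dvd n.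
set p := pdiv n in pP pn.
have [m cop nE] := pfactor_coprime pP n0.
set e := logn p n in nE.
have e0 : 0 < e by rewrite logn_gt0 mem_primes pP n0 pn.
have m0 : 0 < m by move: n0; rewrite nE muln_gt0 => /andP[].
have pe0 : 0 < p ^ e by rewrite expn_gt0 prime_gt0.
have pe1 : 1 < p ^ e by rewrite -(expn0 p) ltn_exp2l // prime_gt1.
have mn : m < n by rewrite nE -{1}[m]muln1 ltn_pmul2l.
have prn : perm_eq (primes n) (p :: primes m).
  apply: uniq_perm; rewrite ?primes_uniq //=.
    rewrite primes_uniq andbT mem_primes pP m0 /=.
    by rewrite -prime_coprime.
  move=> q; rewrite nE primesM // (primesX _ e0) (primes_prime pP) !inE.
  by rewrite orbC.
have Hm : forall q, q \in primes m -> q %% 4 = 1.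
  by move=> q qm; apply: H; rewrite (perm_mem prn) inE qm orbT.
rewrite (perm_size prn) /= nE expnMn -expnM size_Tl_mul ?expn_gt0 ?m0 ?prime_gt0 //; last first.
  by rewrite coprimeXl // coprimeXr // coprime_sym.
rewrite IH //; last by clear -mn nk; lia.
rewrite size_Tl_pp //; last by rewrite muln_gt0 e0.
  by rewrite expnS mulnC.
by apply: H; rewrite (perm_mem prn) inE eqxx.
Qed.
Lemma nec x y l p : coprime x y -> x ^ 2 + y ^ 2 = l ^ 2 -> prime p -> p %| l ->
  p %% 4 = 1.
Proof.
move=> cxy E pP pl.
have p1 := prime_gt1 pP.
have dS : p %| x ^ 2 + y ^ 2 by rewrite E expnS dvdn_mulr.
have py : ~~ (p %| y).
  apply/negP => py.
  have px : p %| x.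
    have : p %| x ^ 2 by move: dS; rewrite dvdn_addl // expnS dvdn_mulr.
    by rewrite Euclid_dvdX // andbT.
  have : p %| gcdn x y by rewrite dvdn_gcd px py.
  by rewrite (eqnP cxy) => /dvdn_leq; clear -p1; lia.
case: (boolP (odd p)) => op; last first.
  have p2 : p = 2.
    by apply/(prime_oddPn pP).
  rewrite p2 in py pl dS.
  have oy : odd y by move: py; rewrite dvdn2 negbK.
  have ox : odd x.
    move: dS; rewrite dvdn2 oddD !oddX /= oy.
    by case: (odd x).
  have d4 : 4 %| x ^ 2 + y ^ 2.
    by rewrite E; case/dvdnP: pl => c ->; rewrite expnMn dvdn_mull.
  rewrite -(odd_double_half x) -(odd_double_half y) ox oy in d4.
  move: d4; rewrite -!muln2.
  have -> : (1 + x./2 * 2) ^ 2 + (1 + y./2 * 2) ^ 2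
     = 4 * (x./2 ^ 2 + x./2 + y./2 ^ 2 + y./2) + 2 by ring.
  by rewrite dvdn_addr ?dvdn_mulr.
case: (boolP (p %% 4 == 1)) => [/eqP //|p4].
exfalso.
have p3 : p %% 4 = 3.
  have p2 : p %% 2 = 1 by rewrite modn2 op.
  move/eqP: p4 => p4; clear -p2 p4; lia.
pose F := 'F_p.
have cF : #|F| = p by rewrite card_Fp.
have chF := pchar_Fp pP.
pose X : F := (x%:R)%R; pose Y : F := (y%:R)%R.
have Y0 : Y != 0%R by rewrite /Y -(dvdn_pcharf chF).
have XY : (X ^+ 2 + Y ^+ 2 = 0)%R.
  by apply/eqP; rewrite /X /Y -!natrX -natrD -(dvdn_pcharf chF).
pose z := (X / Y)%R.
have z2 : (z ^+ 2 = -1)%R.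
  rewrite /z expr_div_n.
  have -> : (X ^+ 2 = - Y ^+ 2)%R by apply/eqP; rewrite -addr_eq0 XY.
  by rewrite mulNr divff // expf_neq0.
have z0 : z != 0%R.
  by apply/negP => /eqP z0; move: z2; rewrite z0 expr0n /= => /eqP; rewrite eq_sym oppr_eq0 oner_eq0.
have zp : (z ^+ p = z)%R by have := expf_card z; rewrite cF.
have h : p.-1 = (2 * (p %/ 4) + 1).*2 by clear -p3; lia.
have zp1 : (z ^+ p.-1 = 1)%R.
  apply: (mulIf z0); rewrite mul1r -exprSr prednK ?prime_gt0 //.
have : (z ^+ p.-1 = -1)%R.
  by rewrite h -mul2n exprM z2 -signr_odd oddD oddM /= expr1.
rewrite zp1 => /eqP; rewrite -subr_eq0 opprK -(natrD F 1 1) -(dvdn_pcharf chF).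
move=> /dvdn_leq; clear -p3; lia.
Qed.

Definition Pp (l : nat) : seq (nat * nat) :=
  [seq xy <- [seq (x, y) | x <- iota 1 l, y <- iota 0 l.+1] |
     (xy.1 ^ 2 + xy.2 ^ 2 == l ^ 2) && coprime xy.1 xy.2].

Lemma Pp_uniq l : uniq (Pp l).
Proof.
rewrite filter_uniq // allpairs_uniq ?iota_uniq //.
by move=> [a b] [c d] _ _ /= [-> ->].
Qed.

Lemma mem_Pp l x y :
  ((x, y) \in Pp l) = [&& 0 < x, x ^ 2 + y ^ 2 == l ^ 2 & coprime x y].
Proof.
rewrite mem_filter; apply/andP/and3P.
  case=> /andP[E c] H; case: (allpairsP H) => [[a b] []]; rewrite !mem_iota.
  move=> /andP[a1 _] _ [ea eb]; subst a b; by split.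
case=> x0 /eqP E c; split; first by rewrite /= E eqxx.
have xl : x <= l by rewrite -(@leq_exp2r _ _ 2) // -E leq_addr.
have yl : y <= l by rewrite -(@leq_exp2r _ _ 2) // -E leq_addl.
by apply: allpairs_f; rewrite mem_iota; lia.
Qed.

Lemma eqZ N a b : 1 < N -> ((a%:R : 'Z_N) = b%:R)%R <-> a = b %[mod N].
Proof.
move=> N1; split => [e|e].
  by have := congr1 val e; rewrite /= !val_Zp_nat.
by apply: val_inj; rewrite /= !val_Zp_nat.
Qed.

Lemma Z0 N a : 1 < N -> ((a%:R : 'Z_N) = 0)%R <-> N %| a.
Proof.
move=> N1; rewrite -[0%R]/((0%N)%:R)%R eqZ // mod0n /dvdn.
by split => [->|/eqP].
Qed.

Lemma coprime_yN x y : coprime x y -> coprime y (x ^ 2 + y ^ 2).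
Proof.
move=> c; rewrite /coprime addnC expnS expn1 gcdnMDl.
by apply: coprimeXr; rewrite coprime_sym.
Qed.

Definition phi (l x y : nat) : nat := val ((x%:R / y%:R)%R : 'Z_(l ^ 2)).

Lemma Pp_unit l x y : 1 < l -> (x, y) \in Pp l ->
  ((y%:R : 'Z_(l ^ 2)) \is a GRing.unit)%R.
Proof.
move=> l1; rewrite mem_Pp => /and3P[_ /eqP E c].
have N1 : 1 < l ^ 2 by rewrite -(expn0 l) ltn_exp2l.
by rewrite unitZpE // -E coprime_sym coprime_yN.
Qed.

Lemma zsq l x y : 1 < l -> (x, y) \in Pp l ->
  (((x%:R / y%:R) ^+ 2 + 1 : 'Z_(l ^ 2)) = 0)%R.
Proof.
move=> l1 P; have U := Pp_unit l1 P.
move: P; rewrite mem_Pp => /and3P[_ /eqP E c].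
have N1 : 1 < l ^ 2 by rewrite -(expn0 l) ltn_exp2l.
rewrite expr_div_n -[in X in (_ + X)%R](divrr (unitrX 2 U)) -mulrDl.
by rewrite -!natrX -natrD E pchar_Zp // mul0r.
Qed.

Lemma phi_in l x y : 1 < l -> (x, y) \in Pp l -> phi l x y \in Tl (l ^ 2).
Proof.
move=> l1 P.
have N1 : 1 < l ^ 2 by rewrite -(expn0 l) ltn_exp2l.
rewrite mem_Tl; apply/andP; split.
  by rewrite /phi; apply: leq_trans (ltn_ord _) _; rewrite Zp_cast.
apply/(Z0 _ N1); rewrite natrD natrX /phi natr_Zp.
exact: zsq.
Qed.

Lemma phi_R l x y : ((phi l x y)%:R : 'Z_(l ^ 2))%R = (x%:R / y%:R)%R.
Proof. by rewrite /phi natr_Zp. Qed.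

Lemma phi_inj l x y x' y' : 1 < l -> (x, y) \in Pp l -> (x', y') \in Pp l ->
  phi l x y = phi l x' y' -> (x, y) = (x', y').
Proof.
move=> l1 P P' e.
have N1 : 1 < l ^ 2 by rewrite -(expn0 l) ltn_exp2l.
have U := Pp_unit l1 P; have U' := Pp_unit l1 P'.
have Z := zsq l1 P.
have ez : ((x%:R / y%:R : 'Z_(l ^ 2)) = x'%:R / y'%:R)%R by apply: val_inj.
move: P P'; rewrite !mem_Pp => /and3P[x0 /eqP E c] /and3P[x0' /eqP E' c'].
have dB : l ^ 2 %| x * x' + y * y'.
  apply/(Z0 _ N1); rewrite natrD !natrM.
  have -> : ((x%:R : 'Z_(l ^ 2)) = (x%:R / y%:R) * y%:R)%R by rewrite divrK.
  have -> : ((x'%:R : 'Z_(l ^ 2)) = (x'%:R / y'%:R) * y'%:R)%R by rewrite divrK.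
  rewrite -ez.
  set z := (x%:R / y%:R)%R.
  have -> : (z * y%:R * (z * y'%:R) + y%:R * y'%:R = (z ^+ 2 + 1) * (y%:R * y'%:R))%R by ring.
  by rewrite Z mul0r.
have Bp : 0 < x * x' + y * y' by rewrite ltn_addr // muln_gt0 x0 x0'.
have lB := dvdn_leq Bp dB.
have exy : x * y' = x' * y.
  have I : (((x * x' + y * y')%N%:Z) ^+ 2 + ((x * y')%N%:Z - (x' * y)%N%:Z) ^+ 2 = ((x ^ 2 + y ^ 2) * (x' ^ 2 + y' ^ 2))%N%:Z)%R.
    by rewrite -!natz; rewrite !(natrM, natrD, natrX); ring.
  rewrite E E' in I.
  clear -I lB; nia.
have dx : x %| x'.
  by rewrite -(@Gauss_dvdl _ _ y) // -exy dvdn_mulr.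
have dx' : x' %| x.
  by rewrite -(@Gauss_dvdl _ _ y') // exy dvdn_mulr.
have ex : x = x' by apply/eqP; rewrite eqn_dvd dx dx'.
subst x'; congr pair.
by apply/eqP; rewrite -(eqn_pmul2l x0) exy.
Qed.

Definition rotz (i x y : nat) : int * int :=
  match i with
  | 0 => ((Posz x), (Posz y))
  | 1 => ((- (Posz y))%R, (Posz x))
  | 2 => ((- (Posz x))%R, (- (Posz y))%R)
  | _ => ((Posz y), (- (Posz x))%R)
  end.

Lemma quad (X Y : int) : (X != 0%R) || (Y != 0%R) ->
  exists i x y, [/\ i < 4, 0 < x & rotz i x y = (X, Y)].
Proof.
move=> nz.
case: (boolP (0 < X)%R) => hX; case: (boolP (0 <= Y)%R) => hY.
- by exists 0, `|X|%N, `|Y|%N; split => //; [lia | rewrite /=; congr pair; lia].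
- by exists 3, `|Y|%N, `|X|%N; split => //; [lia | rewrite /=; congr pair; lia].
- case: (boolP (Y == 0%R)) => hY0.
    move/eqP: hY0 => hY0; subst Y; move: nz; rewrite eqxx orbF => /eqP nz.
    exists 2, `|X|%N, 0; split => //; [lia | rewrite /=; congr pair; lia].
  move/eqP: hY0 => hY0.
  by exists 1, `|Y|%N, `|X|%N; split => //; [lia | rewrite /=; congr pair; lia].
- case: (boolP (X == 0%R)) => hX0.
    move/eqP: hX0 => hX0; subst X.
    by exists 3, `|Y|%N, 0; split => //; [lia | rewrite /=; congr pair; lia].
  move/eqP: hX0 => hX0.
  by exists 2, `|X|%N, `|Y|%N; split => //; [lia | rewrite /=; congr pair; lia].
Qed.

Lemma rotz_norm i x y X Y : rotz i x y = (X, Y) ->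
  x ^ 2 + y ^ 2 = `|X| ^ 2 + `|Y| ^ 2 /\ coprime `|X| `|Y| = coprime x y.
Proof.
case: i => [|[|[|i]]] /= [<- <-]; rewrite ?abszN !absz_nat //.
- by rewrite addnC coprime_sym.
- by rewrite addnC coprime_sym.
Qed.

Lemma rotz_inj i j x y x' y' : i < 4 -> j < 4 -> 0 < x -> 0 < x' ->
  rotz i x y = rotz j x' y' -> [/\ i = j, x = x' & y = y'].
Proof.
move=> i4 j4 x0 x0'.
case: i i4 => [|[|[|[|i]]]] // _; case: j j4 => [|[|[|[|j]]]] // _ /= [e1 e2];
  split; lia.
Qed.

Lemma rotz_cong N (T : 'Z_N) i x y : (T ^+ 2 = -1)%R ->
  ((rotz i x y).1%:~R = T * (rotz i x y).2%:~R)%R -> (x%:R = T * y%:R :> 'Z_N)%R.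
Proof.
move=> T2.
case: i => [|[|[|i]]] /=; rewrite ?mulrNz //.
- move=> e; have h := congr1 (fun z => T * z)%R e; simpl in h.
  rewrite !mulrN mulrA -expr2 T2 mulNr mul1r in h.
  by apply: oppr_inj; exact: (esym h).
- by move/eqP; rewrite mulrN eqr_opp => /eqP.
- move=> e; have h := congr1 (fun z => T * z)%R e; simpl in h.
  rewrite !mulrN mulrA -expr2 T2 mulNr mul1r opprK in h.
  exact: (esym h).
Qed.

Lemma thue l t : 1 < l ->
  exists X Y : int, [/\ (X != 0%R) || (Y != 0%R),
     (X%:~R = (t%:R : 'Z_(l ^ 2)) * Y%:~R)%R, (`|X| <= l)%N & (`|Y| < l)%N].
Proof.
move=> l1.
have N1 : 1 < l ^ 2 by rewrite -(expn0 l) ltn_exp2l.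
pose f (uv : 'I_l.+1 * 'I_l) : 'Z_(l ^ 2) := (uv.1%:R + t%:R * uv.2%:R)%R.
case: (pickP (fun ab : ('I_l.+1 * 'I_l) * ('I_l.+1 * 'I_l) =>
                 (ab.1 != ab.2) && (f ab.1 == f ab.2))) => [[[u v] [u' v']]|none].
  move=> /= /andP[ne /eqP fe].
  exists ((Posz u) - (Posz u'))%R, ((Posz v') - (Posz v))%R.
  have ul := ltn_ord u; have ul' := ltn_ord u'.
  have vl := ltn_ord v; have vl' := ltn_ord v'.
  split.
  - rewrite -negb_and; apply/negP => /andP[/eqP h1 /eqP h2].
    move/eqP: ne; apply; congr pair; apply: val_inj => /=; lia.
  - apply/eqP; rewrite -subr_eq0 !rmorphB /=.
    have -> : (u%:R - u'%:R - t%:R * (v'%:R - v%:R) =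
               (u%:R + t%:R * v%:R) - (u'%:R + t%:R * v'%:R) :> 'Z_(l ^ 2))%R by ring.
    by move: fe; rewrite /f /= => ->; rewrite subrr.
  - lia.
  - lia.
have inj : injective f.
  move=> a b e; have := none (a, b); rewrite /= e eqxx andbT.
  by move/negbFE/eqP.
have := leq_card f inj.
rewrite card_prod !card_ord Zp_cast //.
nia.
Qed.

Lemma cong_sq K a b t : K %| t ^ 2 + 1 -> a = t * b %[mod K] -> K %| a ^ 2 + b ^ 2.
Proof.
move=> dK E.
rewrite /dvdn.
have -> : a ^ 2 + b ^ 2 = (t * b) ^ 2 + b ^ 2 %[mod K].
  by rewrite -modnDml -modnXm E modnXm modnDml.
have -> : (t * b) ^ 2 + b ^ 2 = (t ^ 2 + 1) * b ^ 2 by ring.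
exact: (dvdn_mulr _ dK).
Qed.

Lemma coprime_from_cong l t x y : 0 < x -> l ^ 2 %| t ^ 2 + 1 ->
  x ^ 2 + y ^ 2 = l ^ 2 -> x = t * y %[mod l ^ 2] -> coprime x y.
Proof.
move=> x0 dt E cg.
set g := gcdn x y.
have g0 : 0 < g by rewrite gcdn_gt0 x0.
have [a xa] : exists a, x = a * g by exists (x %/ g); rewrite divnK // dvdn_gcdl.
have [b yb] : exists b, y = b * g by exists (y %/ g); rewrite divnK // dvdn_gcdr.
have a0 : 0 < a by move: x0; rewrite xa muln_gt0 => /andP[].
set M := a ^ 2 + b ^ 2.
have NE : l ^ 2 = g * (g * M) by rewrite -E xa yb /M; ring.
have cg' : a = t * b %[mod g * M].
  apply/eqP; rewrite -(eqn_pmul2l g0) !muln_modr -NE.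
  by apply/eqP; rewrite mulnC -xa cg yb; congr (_ %% _); ring.
have dK : g * M %| t ^ 2 + 1 by apply: dvdn_trans dt; rewrite NE dvdn_mull.
have := cong_sq dK cg'; rewrite -/M => dM.
have M0 : 0 < M by rewrite /M ltn_addr // expn_gt0 a0.
have := dvdn_leq M0 dM.
rewrite /coprime -/g => h.
apply/eqP; clear -h M0 g0; nia.
Qed.

Lemma phi_surj l t : 1 < l -> t \in Tl (l ^ 2) ->
  exists x y, (x, y) \in Pp l /\ phi l x y = t.
Proof.
move=> l1; rewrite mem_Tl => /andP[tl dt].
have N1 : 1 < l ^ 2 by rewrite -(expn0 l) ltn_exp2l.
pose T : 'Z_(l ^ 2) := (t%:R)%R.
have T2 : (T ^+ 2 = -1)%R.
  have := (proj2 (Z0 _ N1) dt); rewrite natrD natrX => /eqP.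
  by rewrite addr_eq0 => /eqP.
have [X [Y [nz cX bX bY]]] := thue t l1.
have [i [x [y [i4 x0 rz]]]] := quad nz.
have cxy : (x%:R = T * y%:R :> 'Z_(l ^ 2))%R.
  by apply: (@rotz_cong _ T i x y T2); rewrite rz.
have [nE cE] := rotz_norm rz.
have dN : l ^ 2 %| x ^ 2 + y ^ 2.
  apply/(Z0 _ N1); rewrite natrD !natrX cxy exprMn T2 mulN1r.
  by rewrite addNr.
have E : x ^ 2 + y ^ 2 = l ^ 2.
  have b1 : x ^ 2 + y ^ 2 < 2 * l ^ 2.
    rewrite nE.
    have h1 : `|X| ^ 2 <= l ^ 2 by rewrite leq_exp2r.
    have h2 : `|Y| ^ 2 < l ^ 2 by rewrite ltn_exp2r.
    clear -h1 h2; lia.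
  have b2 : 0 < x ^ 2 + y ^ 2 by rewrite ltn_addr // expn_gt0 x0.
  case/dvdnP: dN => c Ec; rewrite Ec in b1 b2 *.
  clear -b1 b2; move: b1 b2; move: (l ^ 2) => L.
  case: c => [|[|c]] b1 b2; lia.
have cg : x = t * y %[mod l ^ 2].
  by apply/(eqZ _ _ N1); rewrite natrM.
have cp : coprime x y := coprime_from_cong x0 dt E cg.
have U : ((y%:R : 'Z_(l ^ 2)) \is a GRing.unit)%R.
  by rewrite unitZpE // -E coprime_sym; apply: coprime_yN.
exists x, y; split.
  by rewrite mem_Pp x0 E eqxx cp.
rewrite /phi cxy mulrK //= val_Zp_nat //.
by rewrite modn_small.
Qed.

Lemma size_Pp l : 1 < l -> size (Pp l) = size (Tl (l ^ 2)).
Proof.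
move=> l1.
rewrite -(size_map (fun p => phi l p.1 p.2)); apply: perm_size.
apply: uniq_perm; rewrite ?Tl_uniq //.
  rewrite map_inj_in_uniq ?Pp_uniq // => [[x y] [x' y']] P P' /= e.
  exact: phi_inj l1 P P' e.
move=> t; apply/mapP/idP => [[[x y] P ->]|tT].
  exact: phi_in.
have [x [y [P e]]] := phi_surj l1 tT.
by exists (x, y).
Qed.
Local Open Scope ring_scope.

Notation i0 := (ord0 : 'I_2).
Notation i1 := (ord_max : 'I_2).

Lemma ord2P (i : 'I_2) : i = i0 \/ i = i1.
Proof. by case: i => [[|[|//]]] Hi; [left|right]; apply/val_inj. Qed.

Lemma mx2_eq (R : Type) (A B : 'M[R]_2) : A i0 i0 = B i0 i0 -> A i0 i1 = B i0 i1 ->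
  A i1 i0 = B i1 i0 -> A i1 i1 = B i1 i1 -> A = B.
Proof.
move=> e1 e2 e3 e4; apply/matrixP => i j.
by case: (ord2P i) => ->; case: (ord2P j) => ->.
Qed.

Lemma mulmxT2 (R : comNzRingType) (A : 'M[R]_2) i j :
  (A *m A^T) i j = A i i0 * A j i0 + A i i1 * A j i1.
Proof.
rewrite !mxE big_ord_recl big_ord1 !mxE.
by congr (_ + _); congr (_ * _); congr (A _ _); apply/val_inj.
Qed.

Definition Mz (b : bool) (X Y : int) : 'M[int]_2 :=
  \matrix_(i < 2, j < 2)
    if (i : nat) == 0%N then (if (j : nat) == 0%N then X else (if b then - Y else Y))
    else (if (j : nat) == 0%N then Y else (if b then X else - X)).

Definition mkQ (l : nat) (b : bool) (X Y : int) : 'M[rat]_2 :=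
  \matrix_(i, j) ((Mz b X Y i j)%:~R / l%:R).

Lemma mkQE l b X Y :
  [/\ mkQ l b X Y i0 i0 = X%:~R / l%:R,
      mkQ l b X Y i0 i1 = (if b then - Y else Y)%:~R / l%:R,
      mkQ l b X Y i1 i0 = Y%:~R / l%:R &
      mkQ l b X Y i1 i1 = (if b then X else - X)%:~R / l%:R].
Proof. by rewrite !mxE. Qed.

Lemma norm_rat (l : nat) (X Y : int) : X ^+ 2 + Y ^+ 2 = (l ^ 2)%N%:Z ->
  (X%:~R ^+ 2 + Y%:~R ^+ 2 = (l%:R ^+ 2 : rat)).
Proof.
move=> E; have := congr1 (fun z : int => (z%:~R : rat)) E.
rewrite /= rmorphD !rmorphXn /= => ->.
by rewrite -natrX.
Qed.

Lemma mkQ_orth l b X Y : (0 < l)%N -> X ^+ 2 + Y ^+ 2 = (l ^ 2)%N%:Z ->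
  orthogonal_mx (mkQ l b X Y).
Proof.
move=> l0 E; have K := norm_rat E.
have L0 : (l%:R : rat) != 0 by rewrite pnatr_eq0 -lt0n.
have key : forall a c : rat, a ^+ 2 + c ^+ 2 = l%:R ^+ 2 ->
    a / l%:R * (a / l%:R) + c / l%:R * (c / l%:R) = 1.
  move=> a c e.
  have -> : a / l%:R * (a / l%:R) + c / l%:R * (c / l%:R)
          = (a ^+ 2 + c ^+ 2) * (l%:R)^-1 ^+ 2 by ring.
  by rewrite e -exprMn mulfV // expr1n.
have [e1 e2 e3 e4] := mkQE l b X Y.
rewrite /orthogonal_mx; apply: mx2_eq; rewrite mulmxT2 ?e1 ?e2 ?e3 ?e4 !mxE /=;
  clear e1 e2 e3 e4.
- by case: b; rewrite ?mulrNz ?mulNr ?mulrN ?opprK; apply: key.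
- by case: b; rewrite ?mulrNz; ring.
- by case: b; rewrite ?mulrNz; ring.
- by case: b; rewrite ?mulrNz ?mulNr ?mulrN ?opprK; apply: key; rewrite addrC.
Qed.

Lemma int_div (l m : nat) (z : int) : (0 < l)%N ->
  (m%:R * (z%:~R / l%:R) : rat) \is a Num.int -> (l %| m * `|z|)%N.
Proof.
move=> l0 /intrP[w e].
have L0 : (l%:R : rat) != 0 by rewrite pnatr_eq0 -lt0n.
have e' : ((m%:Z * z)%:~R = (w * l%:Z)%:~R :> rat).
  rewrite !rmorphM /=; apply: (mulIf (invr_neq0 L0)).
  by rewrite -mulrA e -mulrA [X in _ * X]mulfV // mulr1.
have := intr_inj e'.
move=> E; have : (l%:Z %| m%:Z * z)%Z by apply/dvdzP; exists w.
by rewrite dvdzE abszM.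
Qed.

Lemma level_mkQ l b X Y : (0 < l)%N -> coprime `|X| `|Y| -> has_level (mkQ l b X Y) l.
Proof.
move=> l0 c.
have L0 : (l%:R : rat) != 0 by rewrite pnatr_eq0 -lt0n.
split => //; split.
  by move=> i j; rewrite !mxE mulrC divfK // intr_int.
move=> m m0 ml H.
have h0 := H i0 i0; have h1 := H i1 i0.
rewrite !mxE /= in h0 h1.
have d0 := int_div l0 h0; have d1 := int_div l0 h1.
have : (l %| gcdn (m * `|X|) (m * `|Y|))%N by rewrite dvdn_gcd d0 d1.
rewrite -muln_gcdr (eqnP c) muln1 => /(dvdn_leq m0).
by rewrite leqNgt ml.
Qed.

Lemma mkQ_in l b X Y : (0 < l)%N -> X ^+ 2 + Y ^+ 2 = (l ^ 2)%N%:Z ->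
  coprime `|X| `|Y| -> in_O l (mkQ l b X Y).
Proof. by move=> l0 E c; split; [exact: mkQ_orth | exact: level_mkQ]. Qed.

Lemma Mz_dvd b X Y i j : (gcdn `|X| `|Y| %| `|Mz b X Y i j|)%N.
Proof.
rewrite mxE; case: ifP => _; case: ifP => _; case: b;
  by rewrite ?abszN ?dvdn_gcdl ?dvdn_gcdr.
Qed.

Lemma int_scale (m g : nat) (z : int) : (0 < m)%N -> (0 < g)%N -> (g %| `|z|)%N ->
  (m%:R * (z%:~R / (m * g)%:R) : rat) \is a Num.int.
Proof.
move=> m0 g0 d.
have : (g%:Z %| z)%Z by rewrite dvdzE.
case/dvdzP => z' ->.
have M0 : (m%:R : rat) != 0 by rewrite pnatr_eq0 -lt0n.
have G0 : (g%:R : rat) != 0 by rewrite pnatr_eq0 -lt0n.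
have zz : ((z' * g%:Z)%:~R : rat) = z'%:~R * g%:R by rewrite rmorphM.
rewrite zz natrM.
have -> : (m%:R * (z'%:~R * g%:R / (m%:R * g%:R)) : rat) = z'%:~R.
  by field; rewrite M0 G0.
exact: intr_int.
Qed.

Lemma abs_norm (X Y : int) (l : nat) : X ^+ 2 + Y ^+ 2 = (l ^ 2)%N%:Z ->
  (`|X| ^ 2 + `|Y| ^ 2 = l ^ 2)%N.
Proof.
move=> E; apply/eqP; rewrite -eqz_nat -E PoszD -!natz !natrX !natz !abszE.
by rewrite (real_normK (num_real X)) (real_normK (num_real Y)).
Qed.

Lemma norm_abs (X Y : int) (l : nat) : (`|X| ^ 2 + `|Y| ^ 2 = l ^ 2)%N ->
  X ^+ 2 + Y ^+ 2 = (l ^ 2)%N%:Z.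
Proof.
move=> E; rewrite -E PoszD -!natz !natrX !natz !abszE.
by rewrite (real_normK (num_real X)) (real_normK (num_real Y)).
Qed.

Lemma in_O_mkQ l Q : (0 < l)%N -> in_O l Q ->
  exists b X Y, [/\ Q = mkQ l b X Y, X ^+ 2 + Y ^+ 2 = (l ^ 2)%N%:Z & coprime `|X| `|Y|].
Proof.
move=> l0 [O [_ [I Min]]]; move: O; rewrite /orthogonal_mx => O.
have L0 : (l%:R : rat) != 0 by rewrite pnatr_eq0 -lt0n.
set a := Q i0 i0; set b := Q i0 i1; set c := Q i1 i0; set d := Q i1 i1.
have e00 : a * a + b * b = 1.
  by have := congr1 (fun A : 'M[rat]_2 => A i0 i0) O; rewrite /= mulmxT2 mxE.
have e01 : a * c + b * d = 0.
  by have := congr1 (fun A : 'M[rat]_2 => A i0 i1) O; rewrite /= mulmxT2 mxE.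
have e11 : c * c + d * d = 1.
  by have := congr1 (fun A : 'M[rat]_2 => A i1 i1) O; rewrite /= mulmxT2 mxE.
set k := a * d - b * c.
have hc : c = - k * b.
  apply/eqP; rewrite -subr_eq0.
  have -> : c - - k * b = c * (1 - (a * a + b * b)) + a * (a * c + b * d) by rewrite /k; ring.
  by rewrite e00 e01 subrr mulr0 mulr0 addr0.
have hd : d = k * a.
  apply/eqP; rewrite -subr_eq0.
  have -> : d - k * a = d * (1 - (a * a + b * b)) + b * (a * c + b * d) by rewrite /k; ring.
  by rewrite e00 e01 subrr mulr0 mulr0 addr0.
have k2 : k * k = 1.
  have -> : k * k = (k * a) * (k * a) + (- k * b) * (- k * b).
    have -> : (k * a) * (k * a) + (- k * b) * (- k * b) = k * k * (a * a + b * b) by ring.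
    by rewrite e00 mulr1.
  by rewrite -hc -hd addrC.
have [X eX] : exists X : int, l%:R * a = X%:~R.
  by have := I i0 i0; rewrite mxE => /intrP[X eX]; exists X.
have [Y eY] : exists Y : int, l%:R * c = Y%:~R.
  by have := I i1 i0; rewrite mxE => /intrP[Y eY]; exists Y.
have aX : a = X%:~R / l%:R by rewrite -eX [l%:R * a]mulrC mulfK.
have cY : c = Y%:~R / l%:R by rewrite -eY [l%:R * c]mulrC mulfK.
have ac : a * a + c * c = 1.
  rewrite hc -e00; congr (_ + _).
  have -> : (- k * b) * (- k * b) = k * k * (b * b) by ring.
  by rewrite k2 mul1r.
have E : X ^+ 2 + Y ^+ 2 = (l ^ 2)%N%:Z.
  apply: (@intr_inj rat); rewrite rmorphD !rmorphXn /= -eX -eY.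
  have -> : (((l ^ 2)%N%:Z)%:~R : rat) = l%:R ^+ 2 by rewrite -natrX.
  by rewrite -[RHS]mulr1 -ac; ring.
have [bb Qe] : exists bb, Q = mkQ l bb X Y.
  have [ek|ek] : k = 1 \/ k = -1.
      have : (k - 1) * (k + 1) == 0.
        by rewrite (_ : (k - 1) * (k + 1) = k * k - 1); [rewrite k2 subrr | ring].
      by rewrite mulf_eq0 subr_eq0 addr_eq0 => /orP[/eqP|/eqP]; [left|right].
    exists true; have [e1 e2 e3 e4] := mkQE l true X Y; apply: mx2_eq.
    - by rewrite e1 -aX.
    - by rewrite e2 mulrNz mulNr -cY hc ek mulN1r opprK.
    - by rewrite e3 -cY.
    - by rewrite e4 -aX -/d hd ek mul1r.
  exists false; have [e1 e2 e3 e4] := mkQE l false X Y; apply: mx2_eq.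
  - by rewrite e1 -aX.
  - by rewrite e2 -cY hc ek opprK mul1r.
  - by rewrite e3 -cY.
  - by rewrite e4 mulrNz mulNr -aX -/d hd ek mulN1r.
exists bb, X, Y; split => //.
set g := gcdn `|X| `|Y|.
have nE := abs_norm E.
have g0 : (0 < g)%N.
  rewrite gcdn_gt0; case: (posnP `|X|) => hx //=.
  case: (posnP `|Y|) => hy //=.
  have h2 : (l ^ 2 = 0)%N by rewrite -nE hx hy.
  by have := expn_gt0 l 2; rewrite h2 l0.
apply/negPn/negP => ng.
have g1 : (1 < g)%N by move: ng g0; rewrite /coprime -/g; case: g => [|[|]].
have dg : (g %| l)%N.
  rewrite -(@dvdn_pexp2r _ _ 2) // -nE dvdn_add // dvdn_exp2r //.
    exact: dvdn_gcdl.
  exact: dvdn_gcdr.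
set m := (l %/ g)%N.
have lm : l = (m * g)%N by rewrite divnK.
have m0 : (0 < m)%N by move: l0; rewrite lm muln_gt0 => /andP[].
have ml : (m < l)%N by rewrite [in X in (_ < X)%N]lm -[X in (X < _)%N]muln1 ltn_pmul2l.
apply: (Min m m0 ml) => i j.
rewrite Qe !mxE {1}lm.
apply: int_scale => //.
by have := Mz_dvd bb X Y i j; rewrite mxE.
Qed.

Lemma mkQ_inj l b b' X Y X' Y' : (0 < l)%N -> (X != 0) || (Y != 0) ->
  mkQ l b X Y = mkQ l b' X' Y' -> [/\ b = b', X = X' & Y = Y'].
Proof.
move=> l0 nz e.
have L0 : (l%:R : rat) != 0 by rewrite pnatr_eq0 -lt0n.
have cancel (z z' : int) : (z%:~R / l%:R = z'%:~R / l%:R :> rat) -> z = z'.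
  by move/(mulIf (invr_neq0 L0)); apply: intr_inj.
have [e1 e2 e3 e4] := mkQE l b X Y; have [f1 f2 f3 f4] := mkQE l b' X' Y'.
have eX : X = X' by apply: cancel; rewrite -e1 -f1 e.
have eY : Y = Y' by apply: cancel; rewrite -e3 -f3 e.
subst X' Y'; split => //.
have g2 : (if b then - Y else Y) = (if b' then - Y else Y) by apply: cancel; rewrite -e2 -f2 e.
have g4 : (if b then X else - X) = (if b' then X else - X) by apply: cancel; rewrite -e4 -f4 e.
clear e e1 e2 e3 e4 f1 f2 f3 f4.
move: nz g2 g4; case: b; case: b' => //= nz g2 g4; exfalso; move: nz;
  have hX : X = 0 by lia.
- have hY : Y = 0 by lia.
  by rewrite hX hY.
- have hY : Y = 0 by lia.
  by rewrite hX hY.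
Qed.

Definition Lt (l : nat) : seq (bool * (nat * (nat * nat))) :=
  [seq (b, ip) | b <- [:: true; false], ip <- [seq (i, p) | i <- iota 0 4, p <- Pp l]].

Definition Fq (l : nat) (bip : bool * (nat * (nat * nat))) : 'M[rat]_2 :=
  mkQ l bip.1 (rotz bip.2.1 bip.2.2.1 bip.2.2.2).1 (rotz bip.2.1 bip.2.2.1 bip.2.2.2).2.

Definition sQ (l : nat) := map (Fq l) (Lt l).

Lemma mem_Lt l b i p : ((b, (i, p)) \in Lt l) = (i < 4)%N && (p \in Pp l).
Proof.
apply/idP/idP.
  case/allpairsP => [[b' ip'] [_ hip [_ e]]]; subst ip'.
  case/allpairsP: hip => [[i' p'] [hi hp [e1 e2]]]; subst i' p'.
  by rewrite hp andbT; move: hi; rewrite mem_iota.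
case/andP => hi hp.
apply: (allpairs_f (fun b ip => (b, ip))); first by case: b.
by apply: allpairs_f; rewrite // mem_iota.
Qed.

Lemma Lt_uniq l : uniq (Lt l).
Proof.
apply: allpairs_uniq => //; last by move=> [? ?] [? ?] _ _ /= [-> ->].
apply: allpairs_uniq; rewrite ?iota_uniq ?Pp_uniq //.
by move=> [? ?] [? ?] _ _ /= [-> ->].
Qed.

Lemma rotz_nz i x y : (0 < x)%N -> ((rotz i x y).1 != 0) || ((rotz i x y).2 != 0).
Proof.
move=> x0; case: i => [|[|[|i]]] /=.
- by apply/orP; left; apply/eqP; lia.
- by apply/orP; right; apply/eqP; lia.
- by apply/orP; left; apply/eqP; lia.
- by apply/orP; right; apply/eqP; lia.
Qed.

Lemma sQ_uniq l : (1 < l)%N -> uniq (sQ l).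
Proof.
move=> l1; have l0 : (0 < l)%N by apply: ltnW.
rewrite map_inj_in_uniq ?Lt_uniq // => [[b [i [x y]]] [b' [i' [x' y']]]].
rewrite !mem_Lt => /andP[i4 P] /andP[i4' P'].
move: (P) (P'); rewrite !mem_Pp => /and3P[x0 _ _] /and3P[x0' _ _].
rewrite /Fq /= => e.
have [eb eX eY] := mkQ_inj l0 (rotz_nz i y x0) e.
have er : rotz i x y = rotz i' x' y' by rewrite [LHS]surjective_pairing eX eY -surjective_pairing.
have [ei ex ey] := rotz_inj i4 i4' x0 x0' er.
by rewrite eb ei ex ey.
Qed.

Lemma size_sQ l : size (sQ l) = (8 * size (Pp l))%N.
Proof. by rewrite size_map /Lt !size_allpairs size_iota /= mulnA. Qed.

Lemma mem_sQ l Q : (1 < l)%N -> (Q \in sQ l) <-> in_O l Q.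
Proof.
move=> l1; have l0 : (0 < l)%N by apply: ltnW.
split.
  case/mapP => [[b [i [x y]]]]; rewrite mem_Lt => /andP[i4 P] ->.
  move: P; rewrite mem_Pp => /and3P[x0 /eqP E c].
  rewrite /Fq /=.
  case e : (rotz i x y) => [X Y] /=.
  have [nE cE] := rotz_norm e.
  apply: mkQ_in => //; last by rewrite cE.
  by apply: norm_abs; rewrite -nE.
move=> HQ.
have [b [X [Y [-> E c]]]] := in_O_mkQ l0 HQ.
have nz : (X != 0) || (Y != 0).
  rewrite -negb_and; apply/negP => /andP[/eqP hX /eqP hY].
  have := abs_norm E; rewrite hX hY /= => h.
  by have := expn_gt0 l 2; rewrite -h l0.
have [i [x [y [i4 x0 rz]]]] := quad nz.
have [nE cE] := rotz_norm rz.
apply/mapP; exists (b, (i, (x, y))).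
  rewrite mem_Lt i4 mem_Pp x0 -cE c andbT /= nE.
  by rewrite (abs_norm E).
by rewrite /Fq /= rz.
Qed.

Theorem proposition3p1 (l : nat) (hl : (2 <= l)%N) :
  ((exists Q : 'M[rat]_2, in_O l Q) <->
     (forall p : nat, p \in primes l -> p %% 4 = 1)%N)
  /\
  ((forall p : nat, p \in primes l -> p %% 4 = 1)%N ->
     exists s : seq 'M[rat]_2,
       uniq s /\ (forall Q : 'M[rat]_2, Q \in s <-> in_O l Q) /\
       size s = (2 ^ (size (primes l) + 3))%N).
Proof.
have l0 : (0 < l)%N by apply: ltnW.
have sz : (forall p : nat, p \in primes l -> p %% 4 = 1)%N ->
    size (sQ l) = (2 ^ (size (primes l) + 3))%N.
  by move=> H; rewrite size_sQ size_Pp // size_Tl_sq // expnD mulnC.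
split; last first.
  by move=> H; exists (sQ l); split; [exact: sQ_uniq | split; [move=> Q; exact: mem_sQ | exact: sz]].
split.
  case=> Q HQ p.
  have [b [X [Y [_ E c]]]] := in_O_mkQ l0 HQ.
  rewrite mem_primes => /and3P[pP _ pl].
  exact: (nec c (abs_norm E) pP pl).
move=> H.
have := sz H.
case e : (sQ l) => [|Q s] /=; first by move=> h; have := expn_gt0 2 (size (primes l) + 3); rewrite -h.
move=> _; exists Q; apply/(mem_sQ Q hl).
by rewrite e mem_head.
Qed.
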